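(* Let $X$ be a countable infinite set, $\mathcal{I}$ a meager ideal on $X$, and $(Y,\rho)$ a countable crowded $T_1$ space with $\pi w(\rho)<\mathfrak{m}_c$. Then there is an $\mathcal{I}$-crowded topology $\tau$ on $X$ such that $(X,\tau)$ is homeomorphic to $(Y,\rho)$.
   Context: An ideal on $X$ is a family of subsets of $X$ closed under subsets and finite unions; all ideals are assumed proper ($X\notin\mathcal{I}$) and free (every finite subset of $X$ is in $\mathcal{I}$). Meagerness refers to $\mathcal{I}$ as a subset of $2^X$ (identifying sets with characteristic functions). A topology $\tau$ on $X$ is $\mathcal{I}$-crowded if $\tau\cap\mathcal{I}=\{\emptyset\}$. Crowded means without isolated points. $\mathfrak{m}_c$ is the least cardinal $\kappa$ such that MA$(\kappa)$ for countable posets fails. $\pi w$ denotes $\pi$-weight. *)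

(* Defs.v *)
From Stdlib Require Import List.
Import ListNotations.

Definition countable (T : Type) : Prop :=
  exists f : T -> nat, forall x y, f x = f y -> x = y.

Definition countably_infinite (T : Type) : Prop :=
  countable T /\ exists g : nat -> T, forall n m, g n = g m -> n = m.

Definition subset {T : Type} (A B : T -> Prop) : Prop := forall x, A x -> B x.

Definition finite_set {T : Type} (A : T -> Prop) : Prop :=
  exists l : list T, forall x, A x -> In x l.

Definition is_ideal {X : Type} (I : (X -> Prop) -> Prop) : Prop :=
  (forall A B, I B -> subset A B -> I A) /\
  (forall A B, I A -> I B -> I (fun x => A x \/ B x)) /\
  ~ I (fun _ => True) /\
  (forall A, finite_set A -> I A).

(* A basic clopen cylinder is given by a finite list of conditions (x, b):
   "x belongs to the set iff b = true". *)
Definition in_cyl {X : Type} (c : list (X * bool)) (A : X -> Prop) : Prop :=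
  forall p, In p c -> (A (fst p) <-> snd p = true).

Definition cyl_nonempty {X : Type} (c : list (X * bool)) : Prop :=
  exists A, in_cyl c A.

Definition nowhere_dense {X : Type} (N : (X -> Prop) -> Prop) : Prop :=
  forall c, cyl_nonempty c ->
    exists d, cyl_nonempty d /\
      (forall A, in_cyl d A -> in_cyl c A) /\
      (forall A, in_cyl d A -> ~ N A).

Definition meager {X : Type} (M : (X -> Prop) -> Prop) : Prop :=
  exists N : nat -> (X -> Prop) -> Prop,
    (forall n, nowhere_dense (N n)) /\
    (forall A, M A -> exists n, N n A).

Definition is_topology {T : Type} (tau : (T -> Prop) -> Prop) : Prop :=
  tau (fun _ => False) /\ tau (fun _ => True) /\
  (forall F : (T -> Prop) -> Prop, (forall U, F U -> tau U) ->
      tau (fun x => exists U, F U /\ U x)) /\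
  (forall U V, tau U -> tau V -> tau (fun x => U x /\ V x)).

Definition T1 {T : Type} (tau : (T -> Prop) -> Prop) : Prop :=
  forall x y, x <> y -> exists U, tau U /\ U x /\ ~ U y.

Definition crowded {T : Type} (tau : (T -> Prop) -> Prop) : Prop :=
  forall x, ~ tau (fun y => y = x).

Definition nonempty_set {T : Type} (U : T -> Prop) : Prop := exists x, U x.

Definition I_crowded {X : Type} (I : (X -> Prop) -> Prop)
  (tau : (X -> Prop) -> Prop) : Prop :=
  forall U, tau U -> I U -> forall x, ~ U x.

Definition homeomorphic {X Y : Type} (tau : (X -> Prop) -> Prop)
  (rho : (Y -> Prop) -> Prop) : Prop :=
  exists (f : X -> Y) (g : Y -> X),
    (forall x, g (f x) = x) /\ (forall y, f (g y) = y) /\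
    (forall V, rho V -> tau (fun x => V (f x))) /\
    (forall U, tau U -> rho (fun y => U (g y))).

Definition is_pi_base {T J : Type} (rho : (T -> Prop) -> Prop)
  (B : J -> T -> Prop) : Prop :=
  (forall j, rho (B j) /\ nonempty_set (B j)) /\
  (forall U, rho U -> nonempty_set U -> exists j, subset (B j) U).

Definition is_preorder {P : Type} (le : P -> P -> Prop) : Prop :=
  (forall p, le p p) /\ (forall p q r, le p q -> le q r -> le p r).

Definition dense_in {P : Type} (le : P -> P -> Prop) (D : P -> Prop) : Prop :=
  forall p, exists q, D q /\ le q p.

Definition is_filter {P : Type} (le : P -> P -> Prop) (G : P -> Prop) : Prop :=
  (exists p, G p) /\
  (forall p q, G p -> le p q -> G q) /\
  (forall p q, G p -> G q -> exists r, G r /\ le r p /\ le r q).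

Definition MA_countable (K : Type) : Prop :=
  forall (P : Type) (le : P -> P -> Prop),
    is_preorder le -> countable P -> inhabited P ->
    forall D : K -> P -> Prop, (forall k, dense_in le (D k)) ->
    exists G, is_filter le G /\ forall k, exists p, G p /\ D k p.

(* |J| < m_c, where m_c = least cardinal kappa with MA(kappa) failing:
   no K with MA failing has |K| <= |J|. *)
Definition card_lt_mc (J : Type) : Prop :=
  forall K : Type, ~ MA_countable K ->
    ~ exists h : K -> J, forall a b, h a = h b -> a = b.

(* pi w(rho) < m_c : some pi-base has cardinality below m_c
   (equivalently, the minimal one does). *)
Definition piweight_lt_mc {Y : Type} (rho : (Y -> Prop) -> Prop) : Prop :=
  exists (J : Type) (B : J -> Y -> Prop), is_pi_base rho B /\ card_lt_mc J.

(* Main.v *)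
Require Import Defs.
From Stdlib Require Import List Arith Lia Classical ClassicalEpsilon
  FunctionalExtensionality PropExtensionality ProofIrrelevance Cantor FinFun.
Import ListNotations.

Lemma set_ext {T : Type} (U V : T -> Prop) : (forall x, U x <-> V x) -> U = V.
Proof. intro H; apply functional_extensionality; intro x;
  apply propositional_extensionality; apply H. Qed.

Lemma open_inter {T} (rho : (T -> Prop) -> Prop) U V :
  is_topology rho -> rho U -> rho V -> rho (fun x => U x /\ V x).
Proof. intros (_&_&_&H) a b; now apply H. Qed.

Lemma open_compl_pt {T} (rho : (T -> Prop) -> Prop) z :
  is_topology rho -> T1 rho -> rho (fun y => y <> z).
Proof.
  intros Ht H1.
  assert (E : (fun y => y <> z) =
    (fun y => exists U, (rho U /\ ~ U z) /\ U y)).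
  { apply set_ext; intro y; split.
    - intro n. destruct (H1 y z n) as (U&?&?&?). exists U; tauto.
    - intros (U&(_&Hz)&Hy) ->. tauto. }
  rewrite E. destruct Ht as (_&_&Hu&_). apply Hu. tauto.
Qed.

Lemma open_list_inter {T A} (rho : (T -> Prop) -> Prop) (Q : A -> T -> Prop) (L : list A) :
  is_topology rho -> (forall a, rho (Q a)) ->
  rho (fun y => forall a, In a L -> Q a y).
Proof.
  intros Ht HQ. induction L as [|a L IH].
  - assert (E : (fun y : T => forall a : A, In a [] -> Q a y) = fun _ => True).
    { apply set_ext; intro y; simpl; split; tauto. }
    rewrite E. apply Ht.
  - assert (E : (fun y : T => forall b : A, In b (a :: L) -> Q b y) =
       fun y => Q a y /\ (forall b, In b L -> Q b y)).
    { apply set_ext; intro y; simpl; split.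
      - intro H; split; auto.
      - intros [H1 H2] b [<-|Hb]; auto. }
    rewrite E. apply open_inter; auto.
Qed.

Lemma open_compl_list {T} (rho : (T -> Prop) -> Prop) (L : list T) :
  is_topology rho -> T1 rho -> rho (fun y => ~ In y L).
Proof.
  intros Ht H1.
  assert (E : (fun y => ~ In y L) = (fun y => forall z, In z L -> y <> z)).
  { apply set_ext; intro y; split.
    - intros H z Hz ->. tauto.
    - intros H Hy. exact (H y Hy eq_refl). }
  rewrite E. apply open_list_inter; auto. intro; apply open_compl_pt; auto.
Qed.

Lemma open_infinite {T} (rho : (T -> Prop) -> Prop) V v :
  is_topology rho -> T1 rho -> crowded rho -> rho V -> V v ->
  forall L : list T, exists y, V y /\ ~ In y L.
Proof.
  intros Ht H1 Hc HV Hv L.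
  apply NNPP; intro Hn.
  assert (HL : forall y, V y -> In y L).
  { intros y Hy. apply NNPP; intro; apply Hn; eauto. }
  set (Q := fun z y => z = v \/ y <> z).
  assert (HQ : forall z, rho (Q z)).
  { intro z. destruct (classic (z = v)) as [e|ne].
    - assert (E : Q z = fun _ => True).
      { apply set_ext; intro; unfold Q; tauto. }
      rewrite E; apply Ht.
    - assert (E : Q z = fun y => y <> z).
      { apply set_ext; intro; unfold Q; tauto. }
      rewrite E; apply open_compl_pt; auto. }
  assert (HO := open_inter _ _ _ Ht HV (open_list_inter rho Q L Ht HQ)).
  assert (E : (fun y => V y /\ (forall a, In a L -> Q a y)) = (fun y => y = v)).
  { apply set_ext; intro y; split.
    - intros [Hy Ha]. destruct (Ha y (HL y Hy)) as [e|e]; auto. now contradict e.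
    - intros ->. split; auto. intros a _. unfold Q.
      destruct (classic (a = v)); auto. }
  cbv beta in HO. rewrite E in HO. exact (Hc v HO).
Qed.

Lemma fresh_inj {T} (g : nat -> T) : (forall n m, g n = g m -> n = m) ->
  forall L : list T, exists x, ~ In x L.
Proof.
  intros Hg L. apply NNPP; intro Hn.
  assert (Hi : incl (map g (seq 0 (S (length L)))) L).
  { intros x _. apply NNPP; intro; apply Hn; eauto. }
  assert (Hnd : NoDup (map g (seq 0 (S (length L))))).
  { apply FinFun.Injective_map_NoDup. intros a b; apply Hg. apply seq_NoDup. }
  pose proof (NoDup_incl_length Hnd Hi). rewrite length_map, length_seq in H. lia.
Qed.

Fixpoint all_assign {X} (D : list X) : list (list (X * bool)) :=
  match D with
  | [] => [[]]
  | x :: D' => map (cons (x, true)) (all_assign D') ++ map (cons (x, false)) (all_assign D')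
  end.

Lemma all_assign_dom {X} (D : list X) : forall s, In s (all_assign D) ->
  forall p, In p s -> In (fst p) D.
Proof.
  induction D as [|x D IH]; simpl; intros s Hs p Hp.
  - destruct Hs as [<-|[]]; destruct Hp.
  - apply in_app_or in Hs; destruct Hs as [Hs|Hs]; apply in_map_iff in Hs;
    destruct Hs as (s'&<-&Hs'); destruct Hp as [<-|Hp]; simpl; auto;
    right; eapply IH; eauto.
Qed.

Lemma all_assign_cover {X} (D : list X) (A : X -> Prop) :
  exists s, In s (all_assign D) /\ in_cyl s A.
Proof.
  induction D as [|x D IH]; simpl.
  - exists []; split; auto. intros p [].
  - destruct IH as (s&Hs&HA). destruct (classic (A x)) as [Ax|Ax].
    + exists ((x,true)::s); split.
      * apply in_or_app; left; apply in_map; auto.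
      * intros p [<-|Hp]; simpl; [split; auto|auto].
    + exists ((x,false)::s); split.
      * apply in_or_app; right; apply in_map; auto.
      * intros p [<-|Hp]; simpl; [split; [tauto|discriminate]|auto].
Qed.

Lemma in_cyl_app {X} (a b : list (X * bool)) A :
  in_cyl (a ++ b) A <-> in_cyl a A /\ in_cyl b A.
Proof.
  unfold in_cyl; split.
  - intro H; split; intros p Hp; apply H; apply in_or_app; auto.
  - intros [H1 H2] p Hp; apply in_app_or in Hp; destruct Hp; auto.
Qed.

Definition outside {X} (D : list X) (e : list (X * bool)) : Prop :=
  forall p, In p e -> ~ In (fst p) D.

Definition cyl_sub {X} (d c : list (X * bool)) : Prop :=
  forall A, in_cyl d A -> in_cyl c A.

Lemma bool_iff (b b' : bool) : (b = true <-> b' = true) -> b = b'.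
Proof. destruct b, b'; intuition; try discriminate; symmetry; auto. Qed.

Lemma stage_step {X} (eqd : forall x y : X, {x = y} + {x <> y})
  (Nn : (X -> Prop) -> Prop) (ND : nowhere_dense Nn) (D : list X)
  (s : list (X * bool)) (Hs1 : forall p, In p s -> In (fst p) D)
  (Hs3 : forall x, In x D -> exists b, In (x, b) s)
  (e : list (X * bool)) (He1 : outside D e) (He2 : cyl_nonempty e) :
  exists e', outside D e' /\ cyl_nonempty e' /\ cyl_sub e' e /\
    (forall A, in_cyl s A -> in_cyl e' A -> ~ Nn A).
Proof.
  destruct (classic (cyl_nonempty (s ++ e))) as [Hne|Hemp].
  - destruct (ND _ Hne) as (d&(A1&HA1)&Hdsub&Hdav).
    set (fl := fun p : X * bool => if in_dec eqd (fst p) D then false else true).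
    assert (Hfl : forall p, In p (filter fl d) <-> In p d /\ ~ In (fst p) D).
    { intro p. rewrite filter_In. unfold fl. destruct (in_dec eqd (fst p) D);
      split; intros [? ?]; try discriminate; try contradiction; auto. }
    assert (C : forall A, in_cyl s A -> in_cyl (filter fl d) A -> in_cyl d A).
    { intros A HsA HeA [x b] Hp.
      destruct (in_dec eqd x D) as [iD|nD].
      - destruct (Hs3 x iD) as (b'&Hb').
        pose proof (HA1 _ Hp) as E1. simpl in E1.
        pose proof (proj1 (proj1 (in_cyl_app s e A1) (Hdsub _ HA1)) _ Hb') as E2.
        simpl in E2. assert (b = b') by (apply bool_iff; tauto). subst b'.
        exact (HsA _ Hb').
      - apply HeA, Hfl; auto. }
    exists (filter fl d); split; [|split; [|split]].
    + intros p Hp; apply Hfl in Hp; tauto.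
    + exists A1. intros p Hp; apply HA1; apply Hfl in Hp; tauto.
    + intros A HA. destruct Hne as (A0&HA0).
      apply in_cyl_app in HA0; destruct HA0 as [HA0s _].
      set (A' := fun x => (In x D /\ A0 x) \/ (~ In x D /\ A x)).
      assert (HA's : in_cyl s A').
      { intros [x b] Hp. pose proof (Hs1 _ Hp) as iD. simpl in *.
        rewrite <- (HA0s _ Hp). unfold A'. simpl. tauto. }
      assert (HA'e : in_cyl (filter fl d) A').
      { intros [x b] Hp. pose proof Hp as Hp'. apply Hfl in Hp'. simpl in *.
        rewrite <- (HA _ Hp). unfold A'. destruct Hp' as [_ nD]. tauto. }
      pose proof (Hdsub _ (C _ HA's HA'e)) as H'.
      apply in_cyl_app in H'. destruct H' as [_ H'].
      intros [x b] Hp. pose proof (He1 _ Hp) as nD. simpl in *.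
      rewrite <- (H' _ Hp). unfold A'. tauto.
    + intros A HsA HeA. apply Hdav, C; auto.
  - exists e; split; [auto|split; [auto|split]].
    + intros A H; exact H.
    + intros A H1 H2 HN. apply Hemp. exists A. apply in_cyl_app; auto.
Qed.

Lemma stage_fold {X} (eqd : forall x y : X, {x = y} + {x <> y})
  (Nn : (X -> Prop) -> Prop) (ND : nowhere_dense Nn) (D : list X) :
  forall (S : list (list (X * bool))),
  (forall s, In s S -> (forall p, In p s -> In (fst p) D) /\
     (forall x, In x D -> exists b, In (x, b) s)) ->
  forall e, outside D e -> cyl_nonempty e ->
  exists e', outside D e' /\ cyl_nonempty e' /\ cyl_sub e' e /\
    (forall s, In s S -> forall A, in_cyl s A -> in_cyl e' A -> ~ Nn A).
Proof.
  induction S as [|s S IH]; intros HS e He1 He2.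
  - exists e; split; [auto|split; [auto|split]].
    + intros A' H; exact H.
    + intros s [].
  - destruct (HS s (or_introl eq_refl)) as [Hs1 Hs3].
    destruct (stage_step eqd Nn ND D s Hs1 Hs3 e He1 He2) as (e1&H1&H2&H3&H4).
    destruct (IH (fun s' h => HS s' (or_intror h)) e1 H1 H2) as (e2&G1&G2&G3&G4).
    exists e2; split; [auto|split; [auto|split]].
    + intros A H; apply H3, G3, H.
    + intros s' [<-|Hs'] A HA HB; [apply H4; auto; apply G3; auto|eapply G4; eauto].
Qed.

Lemma all_assign_total {X} (D : list X) : forall s, In s (all_assign D) ->
  forall x, In x D -> exists b, In (x, b) s.
Proof.
  induction D as [|y D IH]; simpl; intros s Hs x Hx; [destruct Hx|].
  apply in_app_or in Hs; destruct Hs as [Hs|Hs]; apply in_map_iff in Hs;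
  destruct Hs as (s'&<-&Hs'); destruct Hx as [<-|Hx].
  - exists true; left; auto.
  - destruct (IH s' Hs' x Hx) as (b&?); exists b; right; auto.
  - exists false; left; auto.
  - destruct (IH s' Hs' x Hx) as (b&?); exists b; right; auto.
Qed.

Lemma stage {X} (eqd : forall x y : X, {x = y} + {x <> y})
  (Nn : (X -> Prop) -> Prop) (ND : nowhere_dense Nn) (D : list X) (z : X) :
  ~ In z D ->
  exists E : list (X * bool), outside D E /\ cyl_nonempty E /\
    (forall A, in_cyl E A -> ~ Nn A) /\ (exists x, In (x, true) E).
Proof.
  intro Hz.
  assert (He1 : outside D [(z, true)]) by (intros p [<-|[]]; auto).
  assert (He2 : cyl_nonempty [(z, true)]).
  { exists (fun _ => True). intros p [<-|[]]; simpl; tauto. }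
  destruct (stage_fold eqd Nn ND D (all_assign D)
     (fun s h => conj (all_assign_dom D s h) (all_assign_total D s h)) _ He1 He2)
     as (E&H1&H2&H3&H4).
  exists E; split; [auto|split; [auto|split]].
  - intros A HA. destruct (all_assign_cover D A) as (s&Hs&HsA). eapply H4; eauto.
  - apply NNPP; intro Hn.
    assert (HF : in_cyl E (fun _ => False)).
    { intros [x b] Hp; simpl. destruct b; [|split; [tauto|discriminate]].
      exfalso; apply Hn; eauto. }
    specialize (H3 _ HF (z, true) (or_introl eq_refl)). simpl in H3. tauto.
Qed.

Lemma ND_union {X} (N1 N2 M : (X -> Prop) -> Prop) :
  nowhere_dense N1 -> nowhere_dense N2 -> (forall A, M A -> N1 A \/ N2 A) ->
  nowhere_dense M.
Proof.
  intros H1 H2 HM c Hc.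
  destruct (H1 c Hc) as (d1&Hd1&S1&A1).
  destruct (H2 d1 Hd1) as (d2&Hd2&S2&A2).
  exists d2; split; [auto|split].
  - intros A HA; apply S1, S2, HA.
  - intros A HA HMA. destruct (HM A HMA) as [h|h].
    + exact (A1 A (S2 A HA) h).
    + exact (A2 A HA h).
Qed.

Fixpoint Dseq {X} (stg : nat -> list X -> list (X * bool)) (oi : nat -> list X) (k : nat)
  : list X :=
  match k with
  | 0 => []
  | S k => oi k ++ map fst (stg k (Dseq stg oi k)) ++ Dseq stg oi k
  end.

Lemma in_S_iff {X} (E : list (X * bool)) x :
  In x (map fst (filter snd E)) <-> In (x, true) E.
Proof.
  rewrite in_map_iff. split.
  - intros ([y b]&Hy&Hp). apply filter_In in Hp. simpl in *. destruct Hp; subst; auto.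
  - intro H. exists (x, true); split; auto. apply filter_In; auto.
Qed.

Lemma lemmaT (X : Type) (I : (X -> Prop) -> Prop) (fX : X -> nat)
  (HfX : forall x y, fX x = fX y -> x = y) (g : nat -> X)
  (Hg : forall n m, g n = g m -> n = m) :
  is_ideal I -> meager I ->
  exists S : nat -> list X, (forall k, S k <> []) /\
    (forall k x, In x (S k) -> k <= fX x) /\
    (forall A, I A -> exists n, forall k, n <= k -> ~ (forall x, In x (S k) -> A x)).
Proof.
  intros HI (N&HND&Hcov).
  assert (eqd : forall x y : X, {x = y} + {x <> y}).
  { intros x y. destruct (Nat.eq_dec (fX x) (fX y)) as [e|n].
    - left; auto.
    - right; intro; subst; auto. }
  set (Nt := fun k (A : X -> Prop) => exists i, i <= k /\ N i A).
  assert (NDt : forall k, nowhere_dense (Nt k)).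
  { induction k as [|k IH].
    - apply (ND_union (N 0) (N 0)); auto. intros A (i&Hi&HA).
      assert (i = 0) by lia; subst; auto.
    - apply (ND_union (Nt k) (N (S k))); auto. intros A (i&Hi&HA).
      destruct (Nat.eq_dec i (S k)) as [->|ne]; auto.
      left; exists i; split; auto; lia. }
  assert (Hstg : forall k (D : list X), exists E, outside D E /\ cyl_nonempty E /\
    (forall A, in_cyl E A -> ~ Nt k A) /\ (exists x, In (x, true) E)).
  { intros k D. destruct (fresh_inj g Hg D) as (z&Hz). apply (stage eqd _ (NDt k) D z Hz). }
  set (stg := fun k D => proj1_sig (constructive_indefinite_description _ (Hstg k D))).
  assert (Hstg' : forall k D, outside D (stg k D) /\ cyl_nonempty (stg k D) /\
    (forall A, in_cyl (stg k D) A -> ~ Nt k A) /\ (exists x, In (x, true) (stg k D))).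
  { intros k D. unfold stg. destruct (constructive_indefinite_description _ _); auto. }
  assert (Hoi : forall m, exists l : list X, forall x, fX x = m -> In x l).
  { intro m. destruct (classic (exists x, fX x = m)) as [(x&Hx)|H].
    - exists [x]. intros y Hy. left. apply HfX. congruence.
    - exists []. intros y Hy. apply H; eauto. }
  set (oi := fun m => proj1_sig (constructive_indefinite_description _ (Hoi m))).
  assert (Hoi' : forall m x, fX x = m -> In x (oi m)).
  { intros m. unfold oi. destruct (constructive_indefinite_description _ _); auto. }
  set (D := Dseq stg oi).
  set (E := fun k => stg k (D k)).
  assert (Dmono : forall k k', k <= k' -> incl (D k) (D k')).
  { intros k k' H. induction H as [|k' H IH]; [intros x h; auto|].
    intros x h. simpl. apply in_or_app; right; apply in_or_app; right; auto. }
  assert (Ein : forall i k x b, i < k -> In (x, b) (E i) -> In x (D k)).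
  { intros i k x b Hik Hp. apply (Dmono (S i)); [lia|]. simpl.
    apply in_or_app; right; apply in_or_app; left. apply in_map_iff.
    exists (x, b); auto. }
  assert (Eout : forall k x b, In (x, b) (E k) -> ~ In x (D k)).
  { intros k x b Hp. exact (proj1 (Hstg' k (D k)) _ Hp). }
  exists (fun k => map fst (filter snd (E k))). split; [|split].
  - intros k Hk. destruct (proj2 (proj2 (proj2 (Hstg' k (D k))))) as (x&Hx).
    assert (In x (map fst (filter snd (E k)))) by (apply in_S_iff; auto).
    rewrite Hk in H; destruct H.
  - intros k x Hx. apply in_S_iff in Hx. apply Eout in Hx.
    destruct (le_lt_dec k (fX x)) as [h|h]; auto. exfalso; apply Hx.
    apply (Dmono (S (fX x))); [lia|]. simpl. apply in_or_app; left; apply Hoi'; auto.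
  - intros A HA. apply NNPP; intro Hn.
    assert (Hinf : forall n, exists k, n <= k /\ forall x, In x (map fst (filter snd (E k))) -> A x).
    { intro n. apply NNPP; intro H1. apply Hn. exists n. intros k Hk H2. apply H1; eauto. }
    set (A' := fun x => A x /\ exists k, In (x, true) (E k)).
    assert (HA' : I A').
    { destruct HI as (Hsub&_). apply (Hsub A' A HA). intros x [h _]; exact h. }
    destruct (Hcov A' HA') as (n&Hn').
    destruct (Hinf n) as (k&Hk&HkA).
    assert (Hcyl : in_cyl (E k) A').
    { intros [x b] Hp. simpl. destruct b.
      - split; auto. intros _. split.
        + apply HkA, in_S_iff; auto.
        + exists k; auto.
      - split; [|discriminate]. intros [_ (k'&Hk')]. exfalso.
        destruct (lt_eq_lt_dec k' k) as [[lt|eq]|gt].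
        + apply (Eout k x false Hp). eapply Ein; eauto.
        + subst k'. destruct (proj1 (proj2 (Hstg' k (D k)))) as (A0&HA0).
          pose proof (HA0 _ Hp) as e1. pose proof (HA0 _ Hk') as e2. simpl in *.
          assert (false = true) by tauto. discriminate.
        + apply (Eout k' x true Hk'). eapply Ein; eauto. }
    apply (proj1 (proj2 (proj2 (Hstg' k (D k)))) A' Hcyl).
    exists n; split; auto.
Qed.

Definition good {X Y} (l : list (X * Y)) : Prop :=
  (forall x y y', In (x, y) l -> In (x, y') l -> y = y') /\
  (forall x x' y, In (x, y) l -> In (x', y) l -> x = x').

Lemma good_nil {X Y} : @good X Y [].
Proof. split; intros ? ? ? []. Qed.

Lemma good_cons {X Y} (l : list (X * Y)) x y :
  good l -> (forall y', ~ In (x, y') l) -> (forall x', ~ In (x', y) l) ->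
  good ((x, y) :: l).
Proof.
  intros [G1 G2] H1 H2; split.
  - intros a b b' [e|h] [e'|h']; [congruence| | |eauto]; exfalso;
      [inversion e|inversion e']; subst; eapply H1; eauto.
  - intros a a' b [e|h] [e'|h']; [congruence| | |eauto]; exfalso;
      [inversion e|inversion e']; subst; eapply H2; eauto.
Qed.

Lemma ext_dom {X Y} (freshY : forall L : list Y, exists y, ~ In y L)
  (l : list (X * Y)) x : good l ->
  exists l', good l' /\ incl l l' /\ exists y, In (x, y) l'.
Proof.
  intro Hg. destruct (classic (exists y, In (x, y) l)) as [H|H].
  - exists l; split; [auto|split; [intros a h; auto|auto]].
  - destruct (freshY (map snd l)) as (y&Hy). exists ((x, y) :: l).
    split; [|split; [intros a h; right; auto|exists y; left; auto]].
    apply good_cons; auto.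
    + intros y' h; apply H; eauto.
    + intros x' h; apply Hy. apply in_map_iff; exists (x', y); auto.
Qed.

Lemma ext_ran {X Y} (freshX : forall L : list X, exists x, ~ In x L)
  (l : list (X * Y)) y : good l ->
  exists l', good l' /\ incl l l' /\ exists x, In (x, y) l'.
Proof.
  intro Hg. destruct (classic (exists x, In (x, y) l)) as [H|H].
  - exists l; split; [auto|split; [intros a h; auto|auto]].
  - destruct (freshX (map fst l)) as (x&Hx). exists ((x, y) :: l).
    split; [|split; [intros a h; right; auto|exists x; left; auto]].
    apply good_cons; auto.
    + intros y' h; apply Hx. apply in_map_iff; exists (x, y'); auto.
    + intros x' h; apply H; eauto.
Qed.

Lemma ext_block {X Y} (B : Y -> Prop) (HB : forall L, exists y, B y /\ ~ In y L)
  (l : list (X * Y)) (Hl : good l) : forall xs : list X,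
  (forall x, In x xs -> forall y, ~ In (x, y) l) ->
  exists l', good l' /\ incl l l' /\ (forall x, In x xs -> exists y, In (x, y) l' /\ B y) /\
    (forall x y, In (x, y) l' -> In (x, y) l \/ In x xs).
Proof.
  induction xs as [|x xs IH]; intros Hxs.
  - exists l; split; [auto|split; [intros a h; auto|split]].
    + intros x [].
    + auto.
  - destruct IH as (q&Hq&Hlq&Hq1&Hq2).
    { intros z hz; apply Hxs; right; auto. }
    destruct (classic (exists y, In (x, y) q)) as [(y&Hy)|Hn].
    + exists q; split; [auto|split; [auto|split]].
      * intros z [<-|hz]; auto. destruct (Hq2 _ _ Hy) as [h|h].
        -- exfalso; eapply Hxs; [left; eauto|eauto].
        -- auto.
      * intros a b hab; destruct (Hq2 _ _ hab); [left|right; right]; auto.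
    + destruct (HB (map snd q)) as (y&By&Hy). exists ((x, y) :: q).
      split; [|split; [intros a h; right; auto|split]].
      * apply good_cons; auto.
        -- intros y' h; apply Hn; eauto.
        -- intros x' h; apply Hy; apply in_map_iff; exists (x', y); auto.
      * intros z [<-|hz].
        -- exists y; split; [left|]; auto.
        -- destruct (Hq1 z hz) as (y'&?&?); exists y'; split; [right|]; auto.
      * intros a b [e|hab].
        -- injection e as <- <-; right; left; auto.
        -- destruct (Hq2 _ _ hab); [left|right; right]; auto.
Qed.

Fixpoint enc {X Y} (fX : X -> nat) (fY : Y -> nat) (l : list (X * Y)) : nat :=
  match l with
  | [] => 0
  | (x, y) :: l => S (to_nat (to_nat (fX x, fY y), enc fX fY l))
  end.

Lemma enc_inj {X Y} (fX : X -> nat) (fY : Y -> nat)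
  (HfX : forall x y, fX x = fX y -> x = y) (HfY : forall x y, fY x = fY y -> x = y) :
  forall l l', enc fX fY l = enc fX fY l' -> l = l'.
Proof.
  induction l as [|[x y] l IH]; intros [|[x' y'] l']; cbn [enc]; intro H; try discriminate; auto.
  apply eq_add_S in H. apply (f_equal of_nat) in H. rewrite !cancel_of_to in H.
  pose proof (f_equal fst H) as H1; pose proof (f_equal snd H) as H2; cbn [fst snd] in H1, H2.
  apply (f_equal of_nat) in H1. rewrite !cancel_of_to in H1.
  pose proof (f_equal fst H1) as H4; pose proof (f_equal snd H1) as H3; cbn [fst snd] in H3, H4.
  rename H4 into H1'. clear H1. rename H1' into H1. rewrite (HfX _ _ H1), (HfY _ _ H3), (IH _ H2). auto.
Qed.

Definition Dnl {X Y} (fX : X -> nat) (fY : Y -> nat) n (l : list (X * Y)) : Prop :=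
  (forall x, fX x = n -> exists y, In (x, y) l) /\ (forall y, fY y = n -> exists x, In (x, y) l).

Definition Ejl {X Y J} (B : J -> Y -> Prop) (Sb : nat -> list X) j (l : list (X * Y)) : Prop :=
  exists k, forall x, In x (Sb k) -> exists y, In (x, y) l /\ B j y.

Lemma generic (X Y J : Type) (fX : X -> nat) (fY : Y -> nat)
  (HfX : forall x y, fX x = fX y -> x = y) (HfY : forall x y, fY x = fY y -> x = y)
  (freshX : forall L : list X, exists x, ~ In x L)
  (freshY : forall L : list Y, exists y, ~ In y L)
  (B : J -> Y -> Prop) (HB : forall j L, exists y, B j y /\ ~ In y L)
  (h : nat -> J) (hinj : forall n m, h n = h m -> n = m)
  (Sb : nat -> list X) (HS : forall k x, In x (Sb k) -> k <= fX x)
  (MA : MA_countable J) :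
  exists (f : X -> Y) (g : Y -> X), (forall x, g (f x) = x) /\ (forall y, f (g y) = y) /\
    (forall j, exists k, forall x, In x (Sb k) -> B j (f x)).
Proof.
  set (P := {l : list (X * Y) | good l}).
  set (le := fun (q p : P) => incl (proj1_sig p) (proj1_sig q)).
  set (Fl := fun j l => (forall n, h n = j -> Dnl fX fY n l) /\ Ejl B Sb j l).
  assert (Dpers : forall n l l', incl l l' -> Dnl fX fY n l -> Dnl fX fY n l').
  { intros n l l' Hi [H1 H2]; split.
    - intros x Hx; destruct (H1 x Hx) as (y&?); exists y; auto.
    - intros y Hy; destruct (H2 y Hy) as (x&?); exists x; auto. }
  assert (Epers : forall j l l', incl l l' -> Ejl B Sb j l -> Ejl B Sb j l').
  { intros j l l' Hi (k&Hk); exists k. intros x Hx; destruct (Hk x Hx) as (y&?&?); eauto. }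
  assert (Ddens : forall n l, good l -> exists l', good l' /\ incl l l' /\ Dnl fX fY n l').
  { intros n l Hl.
    destruct (classic (exists x, fX x = n)) as [(x&Hx)|Hnx].
    - destruct (ext_dom freshY l x Hl) as (l1&G1&I1&(y1&Y1)).
      destruct (classic (exists y, fY y = n)) as [(y&Hy)|Hny].
      + destruct (ext_ran freshX l1 y G1) as (l2&G2&I2&(x2&X2)).
        exists l2; split; [auto|split; [intros a ha; auto|split]].
        * intros x' Hx'. rewrite (HfX x' x) by congruence. exists y1; auto.
        * intros y' Hy'. rewrite (HfY y' y) by congruence. exists x2; auto.
      + exists l1; split; [auto|split; [auto|split]].
        * intros x' Hx'. rewrite (HfX x' x) by congruence. exists y1; auto.
        * intros y' Hy'; exfalso; eauto.
    - destruct (classic (exists y, fY y = n)) as [(y&Hy)|Hny].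
      + destruct (ext_ran freshX l y Hl) as (l2&G2&I2&(x2&X2)).
        exists l2; split; [auto|split; [auto|split]].
        * intros x' Hx'; exfalso; eauto.
        * intros y' Hy'. rewrite (HfY y' y) by congruence. exists x2; auto.
      + exists l; split; [auto|split; [intros a ha; auto|split]].
        * intros x' Hx'; exfalso; eauto.
        * intros y' Hy'; exfalso; eauto. }
  assert (Edens : forall j l, good l -> exists l', good l' /\ incl l l' /\ Ejl B Sb j l').
  { intros j l Hl.
    set (k := S (list_max (map (fun p => fX (fst p)) l))).
    destruct (ext_block (B j) (HB j) l Hl (Sb k)) as (l'&G'&I'&H1&_).
    { intros x Hx y Hxy. pose proof (HS k x Hx).
      assert (fX x <= list_max (map (fun p => fX (fst p)) l)).
      { pose proof (proj1 (list_max_le (map (fun p => fX (fst p)) l)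
          (list_max (map (fun p => fX (fst p)) l))) (le_n _)) as HF.
        rewrite Forall_forall in HF. apply HF.
        apply in_map_iff. exists (x, y); auto. }
      unfold k in *; lia. }
    exists l'; split; [auto|split; [auto|]]. exists k; auto. }
  assert (Fdens : forall j l, good l -> exists l', good l' /\ incl l l' /\ Fl j l').
  { intros j l Hl. destruct (classic (exists n, h n = j)) as [(n&Hn)|Hnn].
    - destruct (Ddens n l Hl) as (l1&G1&I1&D1).
      destruct (Edens j l1 G1) as (l2&G2&I2&E2).
      exists l2; split; [auto|split; [intros a ha; auto|split; auto]].
      intros n' Hn'. rewrite (hinj n' n) by congruence. eauto.
    - destruct (Edens j l Hl) as (l2&G2&I2&E2).
      exists l2; split; [auto|split; [auto|split; auto]].
      intros n' Hn'; exfalso; eauto. }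
  assert (Hpre : is_preorder le).
  { split; [intros p a ha; auto|intros p q r H1 H2 a ha; auto]. }
  assert (Hcnt : countable P).
  { exists (fun p => enc fX fY (proj1_sig p)). intros [l hl] [l' hl'] e. simpl in e.
    pose proof (enc_inj fX fY HfX HfY _ _ e). subst l'.
    f_equal. apply proof_irrelevance. }
  assert (Hinh : inhabited P) by (constructor; exact (exist _ [] good_nil)).
  destruct (MA P le Hpre Hcnt Hinh (fun j p => Fl j (proj1_sig p))) as (G&(HG1&HG2&HG3)&HGF).
  { intros j [l hl]. destruct (Fdens j l hl) as (l'&G'&I'&F').
    exists (exist _ l' G'); split; auto. }
  assert (compat : forall p q, G p -> G q -> exists r : P, incl (proj1_sig p) (proj1_sig r) /\
     incl (proj1_sig q) (proj1_sig r)).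
  { intros p q Gp Gq. destruct (HG3 p q Gp Gq) as (r&_&h1&h2). exists r; auto. }
  assert (ufun : forall p q x y y', G p -> G q -> In (x, y) (proj1_sig p) ->
     In (x, y') (proj1_sig q) -> y = y').
  { intros p q x y y' Gp Gq H1 H2. destruct (compat p q Gp Gq) as ([r hr]&h1&h2).
    simpl in *. eapply (proj1 hr); eauto. }
  assert (uinj : forall p q x x' y, G p -> G q -> In (x, y) (proj1_sig p) ->
     In (x', y) (proj1_sig q) -> x = x').
  { intros p q x x' y Gp Gq H1 H2. destruct (compat p q Gp Gq) as ([r hr]&h1&h2).
    simpl in *. eapply (proj2 hr); eauto. }
  assert (HD : forall n, exists p, G p /\ Dnl fX fY n (proj1_sig p)).
  { intro n. destruct (HGF (h n)) as (p&Gp&Fp). exists p; split; auto. apply Fp; auto. }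
  assert (fex : forall x, exists y, exists p, G p /\ In (x, y) (proj1_sig p)).
  { intro x. destruct (HD (fX x)) as (p&Gp&[D1 _]). destruct (D1 x eq_refl) as (y&?).
    eauto. }
  assert (gex : forall y, exists x, exists p, G p /\ In (x, y) (proj1_sig p)).
  { intro y. destruct (HD (fY y)) as (p&Gp&[_ D2]). destruct (D2 y eq_refl) as (x&?).
    eauto. }
  set (f := fun x => proj1_sig (constructive_indefinite_description _ (fex x))).
  set (g := fun y => proj1_sig (constructive_indefinite_description _ (gex y))).
  assert (Hf : forall x, exists p, G p /\ In (x, f x) (proj1_sig p)).
  { intro x. unfold f. destruct (constructive_indefinite_description _ _); auto. }
  assert (Hg : forall y, exists p, G p /\ In (g y, y) (proj1_sig p)).
  { intro y. unfold g. destruct (constructive_indefinite_description _ _); auto. }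
  exists f, g; split; [|split].
  - intro x. destruct (Hf x) as (p&Gp&Hp). destruct (Hg (f x)) as (q&Gq&Hq).
    symmetry; exact (uinj p q x (g (f x)) (f x) Gp Gq Hp Hq).
  - intro y. destruct (Hg y) as (p&Gp&Hp). destruct (Hf (g y)) as (q&Gq&Hq).
    symmetry; exact (ufun p q (g y) y (f (g y)) Gp Gq Hp Hq).
  - intro j. destruct (HGF j) as (p&Gp&[_ (k&Hk)]). exists k. intros x Hx.
    destruct (Hk x Hx) as (y&Hy&By). destruct (Hf x) as (q&Gq&Hq).
    rewrite (ufun q p x (f x) y Gq Gp Hq Hy); auto.
Qed.

Fixpoint seqL {J Y} (stp : list Y -> J * Y) (n : nat) : list Y :=
  match n with
  | 0 => []
  | S n => snd (stp (seqL stp n)) :: seqL stp n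
  end.

Lemma seqL_in {J Y} (stp : list Y -> J * Y) m n : m < n ->
  In (snd (stp (seqL stp m))) (seqL stp n).
Proof.
  induction n as [|n IH]; intro H; [lia|]. simpl.
  destruct (Nat.eq_dec m n) as [->|ne]; [left; auto|right; apply IH; lia].
Qed.

Theorem mainTheorem10 (X : Type) (I : (X -> Prop) -> Prop)
  (Y : Type) (rho : (Y -> Prop) -> Prop) :
  countably_infinite X ->
  is_ideal I -> meager I ->
  countable Y -> inhabited Y ->
  is_topology rho -> T1 rho -> crowded rho ->
  piweight_lt_mc rho ->
  exists tau : (X -> Prop) -> Prop,
    is_topology tau /\ I_crowded I tau /\ homeomorphic tau rho.
Proof.
  intros [(fX&HfX) (gX&HgX)] HI Hmea (fY&HfY) [y0] Ht HT1 Hcr (J&B&(HB1&HB2)&Hcard).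
  assert (MA : MA_countable J).
  { apply NNPP; intro Hn. apply (Hcard J Hn). exists (fun j => j); auto. }
  assert (freshX : forall L : list X, exists x, ~ In x L) by (apply fresh_inj with gX; auto).
  assert (freshY : forall L : list Y, exists y, ~ In y L).
  { intro L. destruct (open_infinite rho (fun _ => True) y0 Ht HT1 Hcr (proj1 (proj2 Ht)) Logic.I L)
      as (y&_&Hy). eauto. }
  assert (HBinf : forall j L, exists y, B j y /\ ~ In y L).
  { intros j L. destruct (HB1 j) as (Hj&(v&Hv)). eapply open_infinite; eauto. }
  assert (Hstep : forall L : list Y, exists jy : J * Y, B (fst jy) (snd jy) /\
     forall y', B (fst jy) y' -> ~ In y' L).
  { intro L. destruct (HB2 (fun y => ~ In y L) (open_compl_list rho L Ht HT1)) as (j&Hj).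
    { destruct (freshY L) as (y&Hy); exists y; auto. }
    destruct (HB1 j) as (_&(y&Hy)). exists (j, y); split; auto. }
  set (stp := fun L => proj1_sig (constructive_indefinite_description _ (Hstep L))).
  assert (Hstp : forall L, B (fst (stp L)) (snd (stp L)) /\
     forall y', B (fst (stp L)) y' -> ~ In y' L).
  { intro L. unfold stp. destruct (constructive_indefinite_description _ _); simpl; auto. }
  set (h := fun n => fst (stp (seqL stp n))).
  assert (hlt : forall m n, m < n -> h m <> h n).
  { intros m n Hmn E. destruct (Hstp (seqL stp m)) as (Bm&_).
    destruct (Hstp (seqL stp n)) as (_&Bn).
    apply (Bn (snd (stp (seqL stp m)))).
    - unfold h in E. rewrite <- E. auto.
    - apply seqL_in; auto. }
  assert (hinj : forall n m, h n = h m -> n = m).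
  { intros n m E. destruct (lt_eq_lt_dec n m) as [[l|e]|l]; auto.
    - exfalso; eapply hlt; eauto.
    - exfalso; eapply hlt; eauto. }
  destruct (lemmaT X I fX HfX gX HgX HI Hmea) as (Sb&HS1&HS2&HS3).
  destruct (generic X Y J fX fY HfX HfY freshX freshY B HBinf h hinj Sb HS2 MA)
    as (f&g&gf&fg&Hblk).
  exists (fun U => rho (fun y => U (g y))). split; [|split].
  - destruct Ht as (T1&T2&T3&T4). split; [exact T1|split; [exact T2|split]].
    + intros F HF.
      assert (E : (fun y => exists U, F U /\ U (g y)) =
        (fun y => exists V, (exists U, F U /\ V = (fun y' => U (g y'))) /\ V y)).
      { apply set_ext; intro y; split.
        - intros (U&HU&Uy). exists (fun y' => U (g y')); split; eauto.
        - intros (V&(U&HU&->)&Vy). eauto. }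
      rewrite E. apply T3. intros V (U&HU&->). auto.
    + intros U V HU HV. apply T4; auto.
  - intros U HU IU x Ux.
    assert (Hcl : forall n, exists k, n <= k /\ forall z, In z (Sb k) -> U z).
    { intro n.
      set (L := flat_map (fun k => map f (Sb k)) (seq 0 n)).
      assert (HW : rho (fun y => U (g y) /\ ~ In y L)).
      { apply (open_inter rho (fun y => U (g y)) (fun y => ~ In y L)); auto.
        apply open_compl_list; auto. }
      destruct (HB2 _ HW) as (j&Hj).
      { destruct (open_infinite rho _ (f x) Ht HT1 Hcr HU) with (L := L) as (y&?&?).
        - rewrite gf; auto.
        - exists y; auto. }
      destruct (Hblk j) as (k&Hk). exists k. split.
      + destruct (le_lt_dec n k) as [l|l]; auto. exfalso.
        destruct (Sb k) as [|z0 r] eqn:Ek; [apply (HS1 k Ek)|].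
        assert (Hz : In z0 (Sb k)) by (rewrite Ek; left; auto).
        destruct (Hj _ (Hk z0 (or_introl eq_refl))) as (_&Hn). apply Hn. unfold L.
        apply in_flat_map. exists k; split.
        * apply in_seq; lia.
        * apply in_map; auto.
      + intros z Hz. destruct (Hj _ (Hk z Hz)) as (Hu&_). rewrite gf in Hu; auto. }
    destruct (HS3 U IU) as (n&Hn). destruct (Hcl n) as (k&Hk&Hk').
    exact (Hn k Hk Hk').
  - exists f, g. split; [auto|split; [auto|split]].
    + intros V HV.
      assert (E : (fun y => V (f (g y))) = V) by (apply set_ext; intro y; rewrite fg; tauto).
      rewrite E; auto.
    + intros U HU; exact HU.
Qed.
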